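(* For every integer $k\ge 0$ there is a finite set $\mathcal F_k$ of bipartite graphs such that for every graph $G$, $\overline{\mu_\alpha}(G)\le k$ if and only if $G$ is $\mathcal F_k$-free.
   Context: All graphs are finite, simple and undirected. For a graph $G$, $\alpha(G)$ is the maximum size of an independent set and $i(G)$ is the minimum size of a maximal (with respect to inclusion) independent set; the independence gap is $\mu_\alpha(G)=\alpha(G)-i(G)$. The hereditary independence gap is $\overline{\mu_\alpha}(G)=\max\{\mu_\alpha(H): H \text{ an induced subgraph of } G\}$. For a set $\mathcal F$ of graphs, $G$ is $\mathcal F$-free if no induced subgraph of $G$ is isomorphic to a member of $\mathcal F$. *)

(* Defs.v *)
From mathcomp Require Import all_boot.
From Stdlib Require List.
Set Implicit Arguments. Unset Strict Implicit. Unset Printing Implicit Defensive.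

Record sgraph := SGraph {
  sg_n : nat;
  sg_adj : rel 'I_sg_n;
  sg_sym : symmetric sg_adj;
  sg_irr : irreflexive sg_adj }.

Section Graphs.
Variables (T : finType) (e : rel T).

Definition indep (A : {set T}) : bool :=
  [forall x in A, forall y in A, ~~ e x y].

Definition maximal_indep_in (S A : {set T}) : bool :=
  [&& A \subset S, indep A &
      [forall B : {set T}, (A \subset B) && (B \subset S) && indep B ==> (B == A)]].

Definition alpha_in (S : {set T}) : nat :=
  \max_(A : {set T} | (A \subset S) && indep A) #|A|.

(* i(G[S]) : minimum size of a maximal independent set of G[S]
   (maximal independent sets always exist, so the default #|S| is never the only value). *)
Definition indep_dom_in (S : {set T}) : nat :=
  \big[minn/#|S|]_(A : {set T} | maximal_indep_in S A) #|A|.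

(* mu_alpha(G[S]) = alpha(G[S]) - i(G[S]) (nonnegative, so truncation is harmless). *)
Definition mu_alpha_in (S : {set T}) : nat := alpha_in S - indep_dom_in S.

Definition her_mu_alpha : nat := \max_(S : {set T}) mu_alpha_in S.

Definition induced_copy (H : sgraph) : Prop :=
  exists f : 'I_(sg_n H) -> T,
    injective f /\ forall x y, e (f x) (f y) = @sg_adj H x y.

Definition graph_free (F : list sgraph) : Prop :=
  forall H, List.In H F -> ~ induced_copy H.

End Graphs.

Definition bipartite (H : sgraph) : Prop :=
  exists c : 'I_(sg_n H) -> bool, forall x y, @sg_adj H x y -> c x != c y.

(* Main.v *)
Require Import Defs.
From mathcomp Require Import all_boot zify.
From Stdlib Require List.
Set Implicit Arguments. Unset Strict Implicit. Unset Printing Implicit Defensive.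

Lemma bigmin_le (I : eqType) (r : seq I) (P : pred I) (F : I -> nat) d y :
  y \in r -> P y -> \big[minn/d]_(i <- r | P i) F i <= F y.
Proof.
elim: r => [//|a r IH]; rewrite inE big_cons => /orP [/eqP <-|yr] Py.
  by rewrite Py geq_minl.
case: (P a); last exact: IH.
by rewrite (leq_trans (geq_minr _ _)) // IH.
Qed.

Section W.
Variables (T : finType) (e : rel T).

Definition wit k (X Y : {set T}) : bool :=
  [&& indep e X, indep e Y, [forall x in X, exists y in Y, e x y] & #|Y| + k < #|X|].

Lemma indep_sub (A B : {set T}) : B \subset A -> indep e A -> indep e B.
Proof.
move=> sBA /forallP H; apply/forallP => x; apply/implyP => xB.
apply/forallP => y; apply/implyP => yB.
have := H x; rewrite (subsetP sBA) //= => /forallP/(_ y).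
by rewrite (subsetP sBA).
Qed.

Lemma indepP (A : {set T}) x y : indep e A -> x \in A -> y \in A -> e x y = false.
Proof.
by move=> /forallP/(_ x)/implyP H xA yA; move: (H xA) => /forallP/(_ y)/implyP/(_ yA)/negbTE.
Qed.

Lemma wit_her k X Y : wit k X Y -> k < her_mu_alpha e.
Proof.
case/and4P => iX iY /forallP dom card.
set S := X :|: Y.
have h1 : #|X| <= alpha_in e S.
  by apply: (@leq_bigmax_cond _ _ (fun A : {set T} => #|A|) X); rewrite subsetUl iX.
have h2 : indep_dom_in e S <= #|Y|.
  rewrite /indep_dom_in; apply: bigmin_le; first by rewrite mem_index_enum.
  rewrite /maximal_indep_in subsetUr iY /=.
  apply/forallP => B; apply/implyP => /andP [/andP [sYB sBS] iB].
  rewrite eqEsubset sYB andbT; apply/subsetP => b bB.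
  have := subsetP sBS b bB; rewrite inE => /orP [bX|//].
  have := dom b; rewrite bX /= => /existsP [y /andP [yY eby]].
  by rewrite (indepP iB bB (subsetP sYB y yY)) in eby.
have h3 : mu_alpha_in e S <= her_mu_alpha e.
  exact: (@leq_bigmax_cond _ xpredT (mu_alpha_in e) S).
rewrite /mu_alpha_in in h3; lia.
Qed.

Hypothesis esym : symmetric e.
Hypothesis eirr : irreflexive e.

Lemma her_wit k : k < her_mu_alpha e -> exists X Y, wit k X Y.
Proof.
move=> hk.
have [S _ hS] := @eq_bigmax_cond _ xpredT (mu_alpha_in e) (ltac:(by apply/card_gt0P; exists set0)).
rewrite /her_mu_alpha hS in hk.
have [A /andP [sAS iA] hA] := @eq_bigmax_cond _ (fun A : {set T} => (A \subset S) && indep e A) (fun A => #|A|)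
  (ltac:(apply/card_gt0P; exists set0; rewrite unfold_in /= sub0set /=; apply/forallP => x; by rewrite inE)).
have aS : alpha_in e S = #|A| by [].
have hI : indep_dom_in e S = #|S| \/ exists2 I, maximal_indep_in e S I & indep_dom_in e S = #|I|.
  rewrite /indep_dom_in; apply: (big_ind (fun m => m = #|S| \/ exists2 I, maximal_indep_in e S I & m = #|I|)); first by left.
    move=> x y hx hy /=; case: (leqP x y) => hxy.
      by [].
    by [].
  by move=> I HI; right; exists I.
case: hI => [hd|[I mI hd]].
  rewrite /mu_alpha_in aS hd in hk; have := subset_leq_card sAS; lia.
move: mI => /and3P [sIS iI /forallP mI].
exists (A :\: I), (I :\: A); apply/and4P; split.
- by apply: indep_sub iA; apply: subsetDl.
- by apply: indep_sub iI; apply: subsetDl.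
- apply/forallP => x; apply/implyP; rewrite inE => /andP [xI xA].
  have := mI (x |: I); rewrite subsetUr /=.
  rewrite [_ |: _ \subset _]subUset sIS sub1set (subsetP sAS) //=.
  have -> : (x |: I == I) = false.
    by apply/negbTE; apply/eqP => h; move: xI; rewrite -h setU11.
  rewrite implybF => /forallPn [u]; rewrite negb_imply => /andP [uB /forallPn [v]].
  rewrite negb_imply negbK => /andP [vB euv].
  have xA' : x \in S by rewrite (subsetP sAS).
  have yfin : forall y, y \in I -> e x y -> [exists y in I :\: A, e x y].
    move=> y yI exy; apply/existsP; exists y; rewrite exy andbT !inE yI andbT.
    by apply/negP => yA; rewrite (indepP iA xA yA) in exy.
  move: uB vB; rewrite !in_setU1 => /orP [/eqP ux|uI] /orP [/eqP vx|vI].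
  - by rewrite ux vx eirr in euv.
  - by apply: (yfin v vI); rewrite -ux.
  - by apply: (yfin u uI); rewrite -vx esym.
  - by rewrite (indepP iI uI vI) in euv.
- have c1 := cardsID I A; have c2 := cardsID A I.
  rewrite setIC in c2.
  rewrite /mu_alpha_in aS hd in hk; lia.
Qed.

Lemma shrink k X Y : wit k X Y ->
  exists X' Y', wit k X' Y' /\ #|X'| + #|Y'| <= 3 * k + 3.
Proof.
move: {2}(#|X| + #|Y|) (leqnn (#|X| + #|Y|)) => m.
elim: m X Y => [|m IH] X Y hm w.
  by exists X, Y; split => //; lia.
case: (leqP (#|X| + #|Y|) (3 * k + 3)) => hs; first by exists X, Y.
move: (w) => /and4P [iX iY /forallP dom card].
case: (ltnP (#|Y| + k.+1) #|X|) => hc.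
  have : 0 < #|X| by lia.
  case/card_gt0P => x xX.
  apply: (IH (X :\ x) Y); first by have := cardsD1 x X; rewrite xX; lia.
  apply/and4P; split => //.
  - by apply: indep_sub iX; apply: subsetDl.
  - apply/forallP => z; apply/implyP; rewrite inE => /andP [_ zX].
    by have := dom z; rewrite zX.
  - by have := cardsD1 x X; rewrite xX; lia.
pose g x := odflt x [pick y in Y | e x y].
have gP : forall x, x \in X -> (g x \in Y) && e x (g x).
  move=> x xX; rewrite /g; case: pickP => [y /andP [-> ->] //|H] /=.
  have := dom x; rewrite xX => /existsP [y /andP [yY exy]].
  by have := H y; rewrite yY exy.
pose Z y := [set x in X | g x == y].
have : [exists y in Y, #|Z y| <= 1].
  apply: contraT => /existsPn H.
  have H2 : forall y, y \in Y -> 2 <= #|Z y|.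
    by move=> y yY; have := H y; rewrite yY /= -ltnNge.
  have : #|X| = \sum_(y in Y) #|Z y|.
    rewrite -sum1_card (partition_big g (fun y => y \in Y)); last first.
      by move=> x xX; case/andP: (gP x xX).
    apply: eq_bigr => y yY; rewrite sum1dep_card /Z.
    by apply: eq_card => z; rewrite !inE.
  have : \sum_(y in Y) 2 <= \sum_(y in Y) #|Z y| by apply: leq_sum.
  rewrite sum_nat_const => ? ?; exfalso; lia.
case/existsP => y /andP [yY hZ].
apply: (IH (X :\: Z y) (Y :\ y)).
  have := cardsD1 y Y; rewrite yY; have := cardsID (Z y) X; lia.
apply/and4P; split.
- by apply: indep_sub iX; apply: subsetDl.
- by apply: indep_sub iY; apply: subsetDl.
- apply/forallP => z; apply/implyP; rewrite !inE => /andP [hz zX].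
  rewrite zX /= in hz.
  case/andP: (gP z zX) => gY ezg; apply/existsP; exists (g z).
  by rewrite !inE gY ezg hz.
- have : #|X :&: Z y| <= 1.
    by apply: leq_trans hZ; apply: subset_leq_card; apply: subsetIr.
  have := cardsD1 y Y; rewrite yY; have := cardsID (Z y) X; lia.
Qed.
End W.

Definition mkadj n (A : {ffun 'I_n * 'I_n -> bool}) : rel 'I_n :=
  fun i j => [&& i != j, A (i, j) & A (j, i)].

Lemma mkadj_sym n A : symmetric (@mkadj n A).
Proof. by move=> i j; rewrite /mkadj eq_sym; case: (A (i, j)); case: (A (j, i)); rewrite ?andbT ?andbF. Qed.

Lemma mkadj_irr n A : irreflexive (@mkadj n A).
Proof. by move=> i; rewrite /mkadj eqxx. Qed.

Definition mkg n A : sgraph := SGraph (@mkadj_sym n A) (@mkadj_irr n A).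

Definition good k (H : sgraph) : bool :=
  [exists X : {set 'I_(sg_n H)}, exists Y : {set 'I_(sg_n H)},
     wit (@sg_adj H) k X Y && (X :|: Y == setT)].

Definition Fam k : list sgraph :=
  List.flat_map (fun n => List.filter (good k)
     (List.map (@mkg n) (enum {ffun 'I_n * 'I_n -> bool}))) (List.seq 0 (3 * k + 4)).

Lemma mem_In (T : eqType) (x : T) s : x \in s -> List.In x s.
Proof. elim: s => //= a s IH; rewrite inE => /orP [/eqP ->|/IH]; auto. Qed.

Theorem mainTheorem15 :
  forall k : nat, exists F : list sgraph,
    (forall H, List.In H F -> bipartite H) /\
    (forall (T : finType) (e : rel T), symmetric e -> irreflexive e ->
       (her_mu_alpha e <= k <-> graph_free e F)).
Proof.
move=> k; exists (Fam k); split.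
  move=> H; rewrite /Fam => /List.in_flat_map [n [_ /List.filter_In [_ gH]]].
  case/existsP: gH => X /existsP [Y /andP [/and4P [iX iY _ _] /eqP cov]].
  exists (fun i => i \in X) => x y axy; apply/negP => /eqP hc.
  case/boolP: (x \in X) => xX.
    by move: hc; rewrite xX => yX; rewrite (indepP iX xX (esym yX)) in axy.
  have xY : x \in Y by move: (in_setT x); rewrite -cov inE (negbTE xX).
  have yY : y \in Y by move: (in_setT y); rewrite -cov inE -hc (negbTE xX).
  by rewrite (indepP iY xY yY) in axy.
move=> T e esym eirr; split.
  move=> hk H HF [f [finj fe]].
  move: HF; rewrite /Fam => /List.in_flat_map [n [_ /List.filter_In [_ gH]]].
  case/existsP: gH => X /existsP [Y /andP [/and4P [iX iY /forallP dom card] _]].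
  suff : k < her_mu_alpha e by rewrite ltnNge hk.
  apply: (@wit_her _ e k (f @: X) (f @: Y)); apply/and4P; split.
  - apply/forallP => u; apply/implyP => /imsetP [a aX ->].
    apply/forallP => v; apply/implyP => /imsetP [b bX ->].
    by rewrite fe (indepP iX aX bX).
  - apply/forallP => u; apply/implyP => /imsetP [a aX ->].
    apply/forallP => v; apply/implyP => /imsetP [b bX ->].
    by rewrite fe (indepP iY aX bX).
  - apply/forallP => u; apply/implyP => /imsetP [a aX ->].
    have := dom a; rewrite aX => /existsP [b /andP [bY ab]].
    by apply/existsP; exists (f b); rewrite imset_f // fe.
  - by rewrite !card_imset.
move=> Hfree; rewrite leqNgt; apply/negP => /(her_wit esym eirr) [X [Y w]].
have [X' [Y' [w' hs]]] := shrink w.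
set S := X' :|: Y'.
pose f : 'I_#|S| -> T := enum_val.
pose A := [ffun p : 'I_#|S| * 'I_#|S| => e (f p.1) (f p.2)].
have adjE : forall i j, mkadj A i j = e (f i) (f j).
  move=> i j; rewrite /mkadj !ffunE /=.
  case: eqP => [->|/eqP ij]; first by rewrite eirr.
  by rewrite /= esym andbb.
apply: (Hfree (mkg A)).
  apply/List.in_flat_map; exists #|S|; split.
    have h : #|S| <= 3 * k + 3 by apply: leq_trans hs; apply: leq_card_setU.
    apply/List.in_seq; split; first by apply/leP.
    apply/ltP; lia.
  apply/List.filter_In; split.
    by apply: List.in_map; apply: mem_In; rewrite mem_enum.
  have preS : forall x, x \in S -> exists i, f i = x.
    by move=> x xS; exists (enum_rank_in xS x); rewrite /f enum_rankK_in.
  have cardP : forall B : {set T}, B \subset S -> #|[set i | f i \in B]| = #|B|.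
    move=> B sB; rewrite -(card_imset _ (@enum_val_inj _ (mem S))).
    congr (#|pred_of_set _|); apply/setP => x; apply/imsetP/idP.
      by case=> i; rewrite inE => ? ->.
    move=> xB; have [i fi] := preS x (subsetP sB x xB).
    by exists i; rewrite // inE fi.
  move: w' => /and4P [iX iY /forallP dom card].
  apply/existsP; exists [set i | f i \in X']; apply/existsP; exists [set i | f i \in Y'].
  apply/andP; split; last first.
    apply/eqP; apply/setP => i; rewrite !inE -in_setU; exact: (enum_valP i).
  apply/and4P; split.
  - apply/forallP => i; apply/implyP; rewrite inE => iX'.
    apply/forallP => j; apply/implyP; rewrite inE => jX'.
    by rewrite /= adjE (indepP iX iX' jX').
  - apply/forallP => i; apply/implyP; rewrite inE => iX'.
    apply/forallP => j; apply/implyP; rewrite inE => jX'.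
    by rewrite /= adjE (indepP iY iX' jX').
  - apply/forallP => i; apply/implyP; rewrite inE => iX'.
    have := dom (f i); rewrite iX' => /existsP [y /andP [yY ey]].
    have [j fj] := preS y (ltac:(by rewrite inE yY orbT)).
    by apply/existsP; exists j; rewrite inE /= adjE fj yY.
  - by rewrite !cardP // ?subsetUl ?subsetUr.
exists f; split; first exact: enum_val_inj.
by move=> x y; rewrite /= adjE.
Qed.
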